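(* Let $\alpha$ be an ordinal such that $(T_\alpha,P_\alpha)$ is consistent. Then for every $\mathcal L$-sentence $\varphi$ with $\#\varphi\in P_1^+$, we have $(\mathbb N,T_\alpha,P_\alpha)\not\models_{SK}\varphi\vee\neg\varphi$.
   Context: Language. Let $\mathcal L_{\mathbb N}$ be the language of first-order Peano arithmetic and $\mathcal L=\mathcal L_{\mathbb N}\cup\{\mathrm T,\mathrm P\}$ with unary predicates $\mathrm T,\mathrm P$. $\mathcal L$-formulas are in Tait style: literals are $s=t$, $s\neq t$, $\mathrm Tt$, $\neg\mathrm Tt$, $\mathrm Pt$, $\neg\mathrm Pt$; formulas are built from literals by $\wedge,\vee,\forall,\exists$; negation of an arbitrary formula is defined by De Morgan dualities with $\neg\neg\varphi:=\varphi$. A standard Gödel numbering is fixed; $\#e$ is the code of $e$, $\ulcorner e\urcorner$ the numeral of $\#e$, $\mathrm{val}(t)$ the value of a closed term $t$, $\dot\neg$ the primitive recursive function with $\dot\neg(\#\varphi)=\#\neg\varphi$; $\mathrm T\varphi,\mathrm P\varphi$ abbreviate $\mathrm T\ulcorner\varphi\urcorner,\mathrm P\ulcorner\varphi\urcorner$. Semantics. A partial model is $(\mathbb N,T,P)$ with $\mathbb N$ the standard model and $T=(T^+,T^-)$, $P=(P^+,P^-)$ pairs of subsets of $\omega$. Strong Kleene satisfaction $\models_{SK}$: arithmetic literals evaluated in $\mathbb N$; $\mathrm Tt$ satisfied iff $\mathrm{val}(t)\in T^+$, $\neg\mathrm Tt$ iff $\mathrm{val}(t)\in T^-$, likewise for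 $\mathrm P$ with $P^\pm$; conjunction iff both, disjunction iff at least one, $\forall x\varphi(x)$ iff all numeral instances, $\exists x\varphi(x)$ iff some numeral instance. $(T,P)$ is consistent iff $T^+\cap T^-=\emptyset$ and $P^+\cap P^-=\emptyset$. Base paradoxicality. $\mathrm{PA}[\mathrm{SK}]$ is the two-sided sequent calculus for Strong Kleene logic with identity in $\mathcal L$ (initial sequents $\varphi\Rightarrow\varphi$, cut, weakening, the rule from $\Gamma\Rightarrow\Delta,\varphi$ infer $\neg\varphi,\Gamma\Rightarrow\Delta$, usual rules for $\wedge,\vee,\forall,\exists$, reflexivity $\Rightarrow t=t$, replacement from $\Gamma\Rightarrow\Delta,\varphi(t)$ infer $\Gamma\Rightarrow\Delta,s\neq t,\varphi(s)$) plus the initial sequents of Peano arithmetic and the induction rule for all $\mathcal L$-formulas. A sentence $\varphi$ is base paradoxical iff $\mathrm{PA}[\mathrm{SK}]$ derives $\varphi\Leftrightarrow\neg\mathrm T\varphi$ and $\neg\varphi\Leftrightarrow\mathrm T\varphi$ ($\Leftrightarrow$ meaning both sequents). $B(x)$ is an $\mathcal L_{\mathbb N}$-formula defining in $\mathbb N$ the set of codes of base paradoxical sentences, and $\Pi(x):=B(x)\vee B(\dot\neg x)$. Jump and sequence. Let $\mathscr P(x)$ be the $\mathcal L$-formula which is the disjunction of: (1) $x$ codes a sentence and $\Pi(x)$; (2) $x$ codes a sentence $\mathrm Tt$ ($t$ a closed term) and $\mathrm P(\mathrm{val}(t))$; (3) $x$ codes a sentence $\neg\mathrm Tt$ and $\mathrm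 P(\mathrm{val}(t))$; (4) $x$ codes a sentence $\psi\wedge\theta$ and $(\mathrm P\psi\wedge\mathrm P\theta)\vee(\mathrm T\psi\wedge\mathrm P\theta)\vee(\mathrm T\theta\wedge\mathrm P\psi)$; (5) $x$ codes a sentence $\psi\vee\theta$ and $(\mathrm P\psi\wedge\mathrm P\theta)\vee(\neg\mathrm T\psi\wedge\mathrm P\theta)\vee(\neg\mathrm T\theta\wedge\mathrm P\psi)$; (6) $x$ codes a sentence $\forall v\psi$ and $\exists y\,\mathrm P\psi(\dot y)\wedge\forall y(\mathrm P\psi(\dot y)\vee\mathrm T\psi(\dot y))$; (7) $x$ codes a sentence $\exists v\psi$ and $\exists y\,\mathrm P\psi(\dot y)\wedge\forall y(\mathrm P\psi(\dot y)\vee\neg\mathrm T\psi(\dot y))$; here $\psi(\dot y)$ is the code of the result of substituting the numeral of $y$ for $v$. Write $\mathscr P(\varphi)$ for $\mathscr P(\ulcorner\varphi\urcorner)$. Define $\Gamma_{\mathscr{TP}}(T,P)=\big((\{\#\varphi:(\mathbb N,T,P)\models_{SK}\varphi\},\{\#\varphi:(\mathbb N,T,P)\models_{SK}\neg\varphi\}),(\{\#\varphi:(\mathbb N,T,P)\models_{SK}\mathscr P(\varphi)\},\{\#\varphi:(\mathbb N,T,P)\models_{SK}\varphi\vee\neg\varphi\})\big)$, $\varphi$ ranging over $\mathcal L$-sentences. Define $(T_0,P_0)=((\emptyset,\emptyset),(\emptyset,\emptyset))$, $(T_{\beta+1},P_{\beta+1})=\Gamma_{\mathscr{TP}}(T_\beta,P_\beta)$,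 $(T_\lambda,P_\lambda)=\bigcup_{\beta<\lambda}(T_\beta,P_\beta)$ (componentwise union) for limit $\lambda$; $P_\alpha=(P_\alpha^+,P_\alpha^-)$. *)

(* Defs.v *)
From Stdlib Require Import List Arith.
Import ListNotations.

Inductive term : Type :=
| tvar  : nat -> term
| tzero : term
| tsucc : term -> term
| tplus : term -> term -> term
| tmult : term -> term -> term.

(* Tait-style formulas: literals, /\, \/, forall, exists *)
Inductive formula : Type :=
| feq  : term -> term -> formula
| fneq : term -> term -> formula
| fT   : term -> formula
| fnT  : term -> formula
| fP   : term -> formula
| fnP  : term -> formula
| fand : formula -> formula -> formula
| for_ : formula -> formula -> formula
| fall : formula -> formula          (* binds de Bruijn index 0 *)
| fex  : formula -> formula.

Fixpoint neg (phi : formula) : formula :=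
  match phi with
  | feq s t => fneq s t
  | fneq s t => feq s t
  | fT t => fnT t
  | fnT t => fT t
  | fP t => fnP t
  | fnP t => fP t
  | fand a b => for_ (neg a) (neg b)
  | for_ a b => fand (neg a) (neg b)
  | fall a => fex (neg a)
  | fex a => fall (neg a)
  end.

Fixpoint tsubst (sg : nat -> term) (t : term) : term :=
  match t with
  | tvar n => sg n
  | tzero => tzero
  | tsucc u => tsucc (tsubst sg u)
  | tplus u v => tplus (tsubst sg u) (tsubst sg v)
  | tmult u v => tmult (tsubst sg u) (tsubst sg v)
  end.

Definition tshift (t : term) : term := tsubst (fun k => tvar (S k)) t.

Definition up (sg : nat -> term) : nat -> term :=
  fun n => match n with 0 => tvar 0 | S m => tshift (sg m) end.

Fixpoint fsubst (sg : nat -> term) (phi : formula) : formula :=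
  match phi with
  | feq s t => feq (tsubst sg s) (tsubst sg t)
  | fneq s t => fneq (tsubst sg s) (tsubst sg t)
  | fT t => fT (tsubst sg t)
  | fnT t => fnT (tsubst sg t)
  | fP t => fP (tsubst sg t)
  | fnP t => fnP (tsubst sg t)
  | fand a b => fand (fsubst sg a) (fsubst sg b)
  | for_ a b => for_ (fsubst sg a) (fsubst sg b)
  | fall a => fall (fsubst (up sg) a)
  | fex a => fex (fsubst (up sg) a)
  end.

Definition shift (phi : formula) : formula := fsubst (fun k => tvar (S k)) phi.

Definition scons {X : Type} (x : X) (f : nat -> X) : nat -> X :=
  fun n => match n with 0 => x | S m => f m end.

(* phi(t): substitute t for the variable with index 0 (others shifted down) *)
Definition inst (phi : formula) (t : term) : formula := fsubst (scons t tvar) phi.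

Definition num (n : nat) : term := Nat.iter n tsucc tzero.

Fixpoint tbound (k : nat) (t : term) : Prop :=
  match t with
  | tvar n => n < k
  | tzero => True
  | tsucc u => tbound k u
  | tplus u v => tbound k u /\ tbound k v
  | tmult u v => tbound k u /\ tbound k v
  end.

Fixpoint fbound (k : nat) (phi : formula) : Prop :=
  match phi with
  | feq s t | fneq s t => tbound k s /\ tbound k t
  | fT t | fnT t | fP t | fnP t => tbound k t
  | fand a b | for_ a b => fbound k a /\ fbound k b
  | fall a | fex a => fbound (S k) a
  end.

Definition closed_term (t : term) : Prop := tbound 0 t.
Definition sentence (phi : formula) : Prop := fbound 0 phi.

Fixpoint arithmetical (phi : formula) : Prop :=
  match phi with
  | feq _ _ | fneq _ _ => True
  | fT _ | fnT _ | fP _ | fnP _ => False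
  | fand a b | for_ a b => arithmetical a /\ arithmetical b
  | fall a | fex a => arithmetical a
  end.

Definition cpair (a b : nat) : nat := (a + b) * (a + b + 1) / 2 + b.

Fixpoint code_term (t : term) : nat :=
  match t with
  | tvar n => cpair 0 n
  | tzero => cpair 1 0
  | tsucc u => cpair 2 (code_term u)
  | tplus u v => cpair 3 (cpair (code_term u) (code_term v))
  | tmult u v => cpair 4 (cpair (code_term u) (code_term v))
  end.

Fixpoint code (phi : formula) : nat :=
  match phi with
  | feq s t => cpair 0 (cpair (code_term s) (code_term t))
  | fneq s t => cpair 1 (cpair (code_term s) (code_term t))
  | fT t => cpair 2 (code_term t)
  | fnT t => cpair 3 (code_term t)
  | fP t => cpair 4 (code_term t)
  | fnP t => cpair 5 (code_term t)
  | fand a b => cpair 6 (cpair (code a) (code b))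
  | for_ a b => cpair 7 (cpair (code a) (code b))
  | fall a => cpair 8 (code a)
  | fex a => cpair 9 (code a)
  end.

Definition quote (phi : formula) : term := num (code phi).

(* (N, T, P) with T = (Tpos, Tneg), P = (Ppos, Pneg) *)
Record model : Type := mkModel {
  Tpos : nat -> Prop; Tneg : nat -> Prop;
  Ppos : nat -> Prop; Pneg : nat -> Prop }.

Definition empty_model : model :=
  mkModel (fun _ => False) (fun _ => False) (fun _ => False) (fun _ => False).

Fixpoint tval (rho : nat -> nat) (t : term) : nat :=
  match t with
  | tvar n => rho n
  | tzero => 0
  | tsucc u => S (tval rho u)
  | tplus u v => tval rho u + tval rho v
  | tmult u v => tval rho u * tval rho v
  end.

Fixpoint sat (M : model) (rho : nat -> nat) (phi : formula) : Prop :=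
  match phi with
  | feq s t => tval rho s = tval rho t
  | fneq s t => tval rho s <> tval rho t
  | fT t => Tpos M (tval rho t)
  | fnT t => Tneg M (tval rho t)
  | fP t => Ppos M (tval rho t)
  | fnP t => Pneg M (tval rho t)
  | fand a b => sat M rho a /\ sat M rho b
  | for_ a b => sat M rho a \/ sat M rho b
  | fall a => forall n, sat M (scons n rho) a
  | fex a => exists n, sat M (scons n rho) a
  end.

(* satisfaction of sentences (the environment is irrelevant for them) *)
Definition rho0 : nat -> nat := fun _ => 0.
Definition satS (M : model) (phi : formula) : Prop := sat M rho0 phi.

Definition consistent (M : model) : Prop :=
  (forall n, ~ (Tpos M n /\ Tneg M n)) /\ (forall n, ~ (Ppos M n /\ Pneg M n)).

(* ---------- The calculus PA[SK] (sequents as finite sets = lists) ---------- *)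

(* phi(Sx) for phi(x) with x the variable of index 0 *)
Definition succ_sub : nat -> term :=
  fun n => match n with 0 => tsucc (tvar 0) | S m => tvar (S m) end.

Inductive Der : list formula -> list formula -> Prop :=
| D_ax : forall phi, Der [phi] [phi]
| D_weak : forall G D G' D', Der G D -> incl G G' -> incl D D' -> Der G' D'
| D_cut : forall G D phi, Der G (phi :: D) -> Der (phi :: G) D -> Der G D
| D_neg : forall G D phi, Der G (phi :: D) -> Der (neg phi :: G) D
| D_andL : forall G D a b, Der (a :: b :: G) D -> Der (fand a b :: G) D
| D_andR : forall G D a b, Der G (a :: D) -> Der G (b :: D) -> Der G (fand a b :: D)
| D_orL : forall G D a b, Der (a :: G) D -> Der (b :: G) D -> Der (for_ a b :: G) D
| D_orR : forall G D a b, Der G (a :: b :: D) -> Der G (for_ a b :: D)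
| D_allL : forall G D a t, Der (inst a t :: G) D -> Der (fall a :: G) D
| D_allR : forall G D a,
    Der (map shift G) (a :: map shift D) -> Der G (fall a :: D)
| D_exL : forall G D a,
    Der (a :: map shift G) (map shift D) -> Der (fex a :: G) D
| D_exR : forall G D a t, Der G (inst a t :: D) -> Der G (fex a :: D)
| D_refl : forall t, Der [] [feq t t]
| D_repl : forall G D a s t,
    Der G (inst a t :: D) -> Der G (fneq s t :: inst a s :: D)
| D_PA1 : forall s, Der [] [fneq (tsucc s) tzero]
| D_PA2 : forall s t, Der [] [fneq (tsucc s) (tsucc t); feq s t]
| D_PA3 : forall s, Der [] [feq (tplus s tzero) s]
| D_PA4 : forall s t, Der [] [feq (tplus s (tsucc t)) (tsucc (tplus s t))]
| D_PA5 : forall s, Der [] [feq (tmult s tzero) tzero]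
| D_PA6 : forall s t, Der [] [feq (tmult s (tsucc t)) (tplus (tmult s t) s)]
(* induction rule, for all L-formulas a(x) (x = index 0, fresh for G, D) *)
| D_ind : forall G D a t,
    Der (a :: map shift G) (fsubst succ_sub a :: map shift D) ->
    Der (inst a tzero :: G) (inst a t :: D).

Definition DerIff (phi psi : formula) : Prop := Der [phi] [psi] /\ Der [psi] [phi].

Definition base_paradoxical (phi : formula) : Prop :=
  sentence phi /\
  DerIff phi (neg (fT (quote phi))) /\
  DerIff (neg phi) (fT (quote phi)).

Definition defines_bp (B : formula) : Prop :=
  arithmetical B /\ fbound 1 B /\
  forall n rho, sat empty_model rho (inst B (num n)) <->
                exists phi, code phi = n /\ base_paradoxical phi.

(* ---------- The formula script-P, given by its SK satisfaction clauses ---------- *)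

Definition scrP_sat (B : formula) (M : model) (phi : formula) : Prop :=
  (sentence phi /\
     (satS M (inst B (quote phi)) \/ satS M (inst B (quote (neg phi)))))
  \/ (exists t, phi = fT t /\ sentence phi /\ Ppos M (tval rho0 t))
  \/ (exists t, phi = fnT t /\ sentence phi /\ Ppos M (tval rho0 t))
  \/ (exists psi th, phi = fand psi th /\ sentence phi /\
        ((Ppos M (code psi) /\ Ppos M (code th)) \/
         (Tpos M (code psi) /\ Ppos M (code th)) \/
         (Tpos M (code th) /\ Ppos M (code psi))))
  \/ (exists psi th, phi = for_ psi th /\ sentence phi /\
        ((Ppos M (code psi) /\ Ppos M (code th)) \/
         (Tneg M (code psi) /\ Ppos M (code th)) \/
         (Tneg M (code th) /\ Ppos M (code psi))))
  \/ (exists psi, phi = fall psi /\ sentence phi /\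
        (exists y, Ppos M (code (inst psi (num y)))) /\
        (forall y, Ppos M (code (inst psi (num y))) \/
                   Tpos M (code (inst psi (num y)))))
  \/ (exists psi, phi = fex psi /\ sentence phi /\
        (exists y, Ppos M (code (inst psi (num y)))) /\
        (forall y, Ppos M (code (inst psi (num y))) \/
                   Tneg M (code (inst psi (num y))))).

Definition Gamma (B : formula) (M : model) : model :=
  mkModel
    (fun n => exists phi, sentence phi /\ code phi = n /\ satS M phi)
    (fun n => exists phi, sentence phi /\ code phi = n /\ satS M (neg phi))
    (fun n => exists phi, sentence phi /\ code phi = n /\ scrP_sat B M phi)
    (fun n => exists phi, sentence phi /\ code phi = n /\ satS M (for_ phi (neg phi))).

(* An ordinal alpha is represented as an element a of a well-ordered type
   (A, R); alpha is the order type of the R-predecessors of a. *)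
Definition well_order {A : Type} (R : A -> A -> Prop) : Prop :=
  well_founded R /\
  (forall x y z, R x y -> R y z -> R x z) /\
  (forall x y, R x y \/ x = y \/ R y x).

Definition imm_pred {A : Type} (R : A -> A -> Prop) (b a : A) : Prop :=
  R b a /\ ~ (exists c, R b c /\ R c a).

(* successor stage: Gamma of the stage of the immediate predecessor;
   otherwise (0 or limit): union of the earlier stages *)
Definition stage_step (B : formula) {A : Type} (R : A -> A -> Prop) (a : A)
    (rec : forall b, R b a -> model) : model :=
  let st (f : model -> nat -> Prop) (n : nat) : Prop :=
      (exists b (h : R b a), imm_pred R b a /\ f (Gamma B (rec b h)) n) \/
      ((~ exists b, imm_pred R b a) /\ exists b (h : R b a), f (rec b h) n) in
  mkModel (st Tpos) (st Tneg) (st Ppos) (st Pneg).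

Definition stage (B : formula) {A : Type} (R : A -> A -> Prop)
    (wf : well_founded R) : A -> model :=
  Fix wf (fun _ => model) (stage_step B R).

Definition stage0 : model := empty_model.
Definition stage1 (B : formula) : model := Gamma B stage0.

(* Main.v *)
Require Import Defs.
From Stdlib Require Import List Arith Lia Classical FunctionalExtensionality.
Import ListNotations.

Definition tri (s : nat) := s * (s + 1) / 2.

Lemma tri_succ s : tri (S s) = tri s + S s.
Proof.
  unfold tri. replace (S s * (S s + 1)) with (s * (s + 1) + S s * 2) by ring.
  rewrite Nat.div_add by lia. reflexivity.
Qed.

Lemma tri_mono s s' : s < s' -> tri s + s < tri s'.
Proof.
  intro H; induction H.
  - rewrite tri_succ; lia.
  - rewrite tri_succ; lia.
Qed.

Lemma cpair_inj a b c d : cpair a b = cpair c d -> a = c /\ b = d.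
Proof.
  unfold cpair. change ((a + b) * (a + b + 1) / 2) with (tri (a + b)).
  change ((c + d) * (c + d + 1) / 2) with (tri (c + d)).
  intro H. destruct (lt_eq_lt_dec (a + b) (c + d)) as [[h|h]|h].
  - pose proof (tri_mono _ _ h). lia.
  - rewrite h in H. lia.
  - pose proof (tri_mono _ _ h). lia.
Qed.

Ltac cp := repeat match goal with H : cpair _ _ = cpair _ _ |- _ =>
  apply cpair_inj in H; destruct H end.

Lemma code_term_inj : forall t t', code_term t = code_term t' -> t = t'.
Proof.
  induction t; destruct t'; simpl; intros H; cp; try discriminate; f_equal; auto.
Qed.

Lemma code_inj : forall p p', code p = code p' -> p = p'.
Proof.
  induction p; destruct p'; simpl; intros H; cp; try discriminate; f_equal;
    auto using code_term_inj.
Qed.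

Lemma neg_inv : forall p, neg (neg p) = p.
Proof. induction p; simpl; congruence. Qed.

Lemma tval_subst rho sg t : tval rho (tsubst sg t) = tval (fun k => tval rho (sg k)) t.
Proof. induction t; simpl; auto. Qed.

Lemma tval_ext rho rho' t : (forall k, rho k = rho' k) -> tval rho t = tval rho' t.
Proof. intro E; induction t; simpl; auto. Qed.

Lemma tval_num rho n : tval rho (num n) = n.
Proof. induction n; simpl; auto. Qed.

Lemma sat_ext M p : forall rho rho', (forall k, rho k = rho' k) -> sat M rho p -> sat M rho' p.
Proof.
  induction p; simpl; intros rho rho' E;
    try (rewrite !(tval_ext rho rho') by exact E; tauto).
  - intros [h1 h2]; split; eauto.
  - intros [h|h]; [left|right]; eauto.
  - intros h n. apply (IHp (scons n rho)); auto. intros [|k]; simpl; auto.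
  - intros [n h]. exists n. apply (IHp (scons n rho)); auto. intros [|k]; simpl; auto.
Qed.

Lemma sat_subst M p : forall rho sg, sat M rho (fsubst sg p) <-> sat M (fun k => tval rho (sg k)) p.
Proof.
  induction p; simpl; intros rho sg; try rewrite !tval_subst; try tauto.
  - rewrite IHp1, IHp2; tauto.
  - rewrite IHp1, IHp2; tauto.
  - assert (E : forall n k, tval (scons n rho) (up sg k) = scons n (fun k => tval rho (sg k)) k).
    { intros n [|k]; simpl; auto. unfold tshift. rewrite tval_subst. apply tval_ext. reflexivity. }
    split; intros H n; specialize (H n).
    + apply IHp in H. eapply sat_ext; [|exact H]. exact (E n).
    + apply IHp. eapply sat_ext; [|exact H]. intro k; symmetry; apply E.
  - assert (E : forall n k, tval (scons n rho) (up sg k) = scons n (fun k => tval rho (sg k)) k).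
    { intros n [|k]; simpl; auto. unfold tshift. rewrite tval_subst. apply tval_ext. reflexivity. }
    split; intros [n H]; exists n.
    + apply IHp in H. eapply sat_ext; [|exact H]. exact (E n).
    + apply IHp. eapply sat_ext; [|exact H]. intro k; symmetry; apply E.
Qed.

Lemma inst_sat M rho a t : sat M rho (inst a t) <-> sat M (scons (tval rho t) rho) a.
Proof.
  unfold inst. rewrite sat_subst. split; apply sat_ext; intros [|k]; reflexivity.
Qed.

Lemma shift_sat M rho p : sat M rho (shift p) <-> sat M (fun k => rho (S k)) p.
Proof.
  unfold shift. rewrite sat_subst. split; apply sat_ext; intros k; reflexivity.
Qed.

Lemma cons_lemma M (HM : consistent M) : forall p rho, ~ (sat M rho p /\ sat M rho (neg p)).
Proof.
  destruct HM as [hT hP].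
  induction p; simpl; intros rho [h1 h2];
  repeat match goal with H : _ /\ _ |- _ => destruct H | H : _ \/ _ |- _ => destruct H
    | H : exists _, _ |- _ => destruct H end;
  try solve [eauto | eapply hT; split; eauto | eapply hP; split; eauto
    | eapply IHp; split; eauto | eapply IHp1; split; eauto | eapply IHp2; split; eauto].
Qed.

Lemma sound M (HM : consistent M) G D (H : Der G D) :
  forall rho, (forall g, In g G -> sat M rho g) -> exists d, In d D /\ sat M rho d.
Proof.
  induction H; intros rho HG.
  - exists phi; split; [left; auto | apply HG; left; auto].
  - destruct (IHDer rho (fun g hg => HG g (H0 g hg))) as [d [hd sd]]; exists d; auto.
  - destruct (IHDer1 rho HG) as [d [[<-|hd] sd]].
    + apply IHDer2; intros g [<-|hg]; auto.
    + exists d; auto.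
  - destruct (IHDer rho (fun g hg => HG g (or_intror hg))) as [d [[<-|hd] sd]].
    + exfalso; apply (cons_lemma M HM phi rho); split; auto; apply HG; left; auto.
    + exists d; auto.
  - assert (Hab := HG _ (or_introl eq_refl)); simpl in Hab; destruct Hab.
    apply IHDer; intros g [<-|[<-|hg]]; auto; apply HG; right; auto.
  - destruct (IHDer1 rho HG) as [d [[<-|hd] sd]]; [| exists d; simpl; auto].
    destruct (IHDer2 rho HG) as [d [[<-|hd'] sd']]; [| exists d; simpl; auto].
    exists (fand a b); split; [left; auto | simpl; auto].
  - assert (Hab := HG _ (or_introl eq_refl)); simpl in Hab; destruct Hab.
    + apply IHDer1; intros g [<-|hg]; auto; apply HG; right; auto.
    + apply IHDer2; intros g [<-|hg]; auto; apply HG; right; auto.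
  - destruct (IHDer rho HG) as [d [[<-|[<-|hd]] sd]].
    + exists (for_ a b); split; [left; auto| simpl; auto].
    + exists (for_ a b); split; [left; auto| simpl; auto].
    + exists d; simpl; auto.
  - apply IHDer; intros g [<-|hg]; [|apply HG; right; auto].
    apply inst_sat. assert (Hab := HG _ (or_introl eq_refl)); simpl in Hab; apply Hab.
  - destruct (classic (exists d, In d D /\ sat M rho d)) as [Hd|Hd].
    + destruct Hd as [d [hd sd]]; exists d; simpl; auto.
    + exists (fall a); split; [left; auto|]. simpl; intro n.
      destruct (IHDer (scons n rho)) as [d [[<-|hd] sd]].
      * intros g hg. apply in_map_iff in hg as [g' [<- hg']]. apply shift_sat. exact (HG g' hg').
      * exact sd.
      * exfalso; apply Hd. apply in_map_iff in hd as [d' [<- hd']]. exists d'; split; auto.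
        apply shift_sat in sd; exact sd.
  - assert (Hab := HG _ (or_introl eq_refl)); simpl in Hab; destruct Hab as [n hn].
    destruct (IHDer (scons n rho)) as [d [hd sd]].
    + intros g [<-|hg]; [exact hn|]. apply in_map_iff in hg as [g' [<- hg']].
      apply shift_sat. exact (HG g' (or_intror hg')).
    + apply in_map_iff in hd as [d' [<- hd']]. exists d'; split; auto.
      apply shift_sat in sd; exact sd.
  - destruct (IHDer rho HG) as [d [[<-|hd] sd]].
    + exists (fex a); split; [left; auto|]. simpl; exists (tval rho t); apply inst_sat; exact sd.
    + exists d; simpl; auto.
  - exists (feq t t); simpl; auto.
  - destruct (Nat.eq_dec (tval rho s) (tval rho t)) as [e|ne].
    + destruct (IHDer rho HG) as [d [[<-|hd] sd]].
      * exists (inst a s); split; [right; left; auto|].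
        apply inst_sat; rewrite e; apply inst_sat; exact sd.
      * exists d; simpl; auto.
    + exists (fneq s t); simpl; auto.
  - exists (fneq (tsucc s) tzero); simpl; split; auto.
  - destruct (Nat.eq_dec (tval rho s) (tval rho t)) as [e|ne].
    + exists (feq s t); simpl; auto.
    + exists (fneq (tsucc s) (tsucc t)); simpl; split; auto.
  - exists (feq (tplus s tzero) s); simpl; split; auto; lia.
  - exists (feq (tplus s (tsucc t)) (tsucc (tplus s t))); simpl; split; auto; lia.
  - exists (feq (tmult s tzero) tzero); simpl; split; auto; lia.
  - exists (feq (tmult s (tsucc t)) (tplus (tmult s t) s)); simpl; split; auto; lia.
  - destruct (classic (exists d, In d D /\ sat M rho d)) as [Hd|Hd].
    + destruct Hd as [d [hd sd]]; exists d; simpl; auto.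
    + exists (inst a t); split; [left; auto|]. apply inst_sat.
      assert (Hall : forall n, sat M (scons n rho) a).
      { induction n.
        - assert (h0 := HG _ (or_introl eq_refl)). apply inst_sat in h0. exact h0.
        - destruct (IHDer (scons n rho)) as [d [[<-|hd] sd]].
          + intros g [<-|hg]; [exact IHn|]. apply in_map_iff in hg as [g' [<- hg']].
            apply shift_sat. exact (HG g' (or_intror hg')).
          + apply sat_subst in sd. eapply sat_ext; [|exact sd]. intros [|k]; reflexivity.
          + exfalso; apply Hd. apply in_map_iff in hd as [d' [<- hd']]. exists d'; split; auto.
            apply shift_sat in sd; exact sd. }
      apply Hall.
Qed.

Definition proj (f : model -> nat -> Prop) := f = Tpos \/ f = Tneg \/ f = Ppos \/ f = Pneg.
Definition le_model M N := forall f, proj f -> forall n, f M n -> f N n.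

Lemma sat_mono M N (H : le_model M N) : forall p rho, sat M rho p -> sat N rho p.
Proof.
  assert (hTp : forall n, Tpos M n -> Tpos N n) by (apply H; left; auto).
  assert (hTn : forall n, Tneg M n -> Tneg N n) by (apply H; right; left; auto).
  assert (hPp : forall n, Ppos M n -> Ppos N n) by (apply H; right; right; left; auto).
  assert (hPn : forall n, Pneg M n -> Pneg N n) by (apply H; right; right; right; auto).
  induction p; simpl; intros rho h; auto;
  [ destruct h; split; eauto
  | destruct h; [left|right]; eauto
  | destruct h as [n h]; exists n; eauto ].
Qed.

Lemma scrP_mono B M N (H : le_model M N) p : scrP_sat B M p -> scrP_sat B N p.
Proof.
  assert (hTp : forall n, Tpos M n -> Tpos N n) by (apply H; left; auto).
  assert (hTn : forall n, Tneg M n -> Tneg N n) by (apply H; right; left; auto).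
  assert (hPp : forall n, Ppos M n -> Ppos N n) by (apply H; right; right; left; auto).
  assert (hs := sat_mono M N H).
  unfold scrP_sat, satS.
  intros [h|[h|[h|[h|[h|[h|h]]]]]].
  - left. destruct h as [s h]; split; auto; destruct h as [h|h]; [left|right]; apply hs; exact h.
  - right; left. destruct h as [t [e [s pp]]]; exists t; auto.
  - right; right; left. destruct h as [t [e [s pp]]]; exists t; auto.
  - right; right; right; left. destruct h as [psi [th [e [s hh]]]]; exists psi, th;
    split; auto; split; auto;
    destruct hh as [[x y]|[[x y]|[x y]]]; [left|right;left|right;right]; auto.
  - right; right; right; right; left. destruct h as [psi [th [e [s hh]]]]; exists psi, th;
    split; auto; split; auto;
    destruct hh as [[x y]|[[x y]|[x y]]]; [left|right;left|right;right]; auto.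
  - right; right; right; right; right; left.
    destruct h as [psi [e [s [[y hy] hall]]]]; exists psi; split; auto; split; auto; split;
    [exists y; auto | intro z; destruct (hall z); [left|right]; auto].
  - right; right; right; right; right; right.
    destruct h as [psi [e [s [[y hy] hall]]]]; exists psi; split; auto; split; auto; split;
    [exists y; auto | intro z; destruct (hall z); [left|right]; auto].
Qed.

Lemma Gamma_mono B M N (H : le_model M N) : le_model (Gamma B M) (Gamma B N).
Proof.
  intros f [ -> | [ -> | [ -> | -> ] ] ] n; simpl; intros [phi [s [c h]]]; exists phi; split; auto; split; auto.
  - eapply sat_mono; eauto.
  - eapply sat_mono; eauto.
  - eapply scrP_mono; eauto.
  - eapply sat_mono; eauto.
Qed.

Lemma stage_eq B A R wf (a : A) :
  stage B R wf a = stage_step B R a (fun b _ => stage B R wf b).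
Proof.
  unfold stage. apply (Fix_eq wf (fun _ => model) (stage_step B R)). intros x f g E.
  assert (f = g) as ->.
  { apply functional_extensionality_dep; intro y.
    apply functional_extensionality_dep; intro p. apply E. }
  reflexivity.
Qed.

Lemma stage_unfold B A R wf (a : A) f (Hf : proj f) n :
  f (stage B R wf a) n <->
  (exists b (h : R b a), imm_pred R b a /\ f (Gamma B (stage B R wf b)) n) \/
  ((~ exists b, imm_pred R b a) /\ exists b (h : R b a), f (stage B R wf b) n).
Proof.
  rewrite stage_eq. destruct Hf as [ -> | [ -> | [ -> | -> ] ] ]; simpl; reflexivity.
Qed.

Lemma stage_mono B A R wf (HR : well_order R) :
  forall a : A, (forall b, R b a -> le_model (stage B R wf b) (stage B R wf a)) /\
                le_model (stage B R wf a) (Gamma B (stage B R wf a)).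
Proof.
  intro a; induction a as [a IH] using (well_founded_ind wf).
  assert (P1 : forall b, R b a -> le_model (stage B R wf b) (stage B R wf a)).
  { intros b hb f hf n hn. apply (stage_unfold B A R wf a f hf).
    destruct (classic (exists p, imm_pred R p a)) as [[p hp]|hnp].
    - left. exists p, (proj1 hp). split; auto.
      destruct HR as [_ [_ tot]]. destruct (tot b p) as [hbp|[e|hpb]].
      + apply (proj2 (IH p (proj1 hp))); auto. apply (proj1 (IH p (proj1 hp)) b hbp); auto.
      + subst p. apply (proj2 (IH b hb)); auto.
      + exfalso. apply (proj2 hp). exists b; auto.
    - right. split; auto. exists b, hb; auto. }
  split; auto.
  intros f hf n hn. apply (stage_unfold B A R wf a f hf) in hn.
  destruct hn as [[p [hp [_ h]]]|[_ [b [hb h]]]].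
  - apply (Gamma_mono _ _ _ (P1 p hp)); auto.
  - apply (Gamma_mono _ _ _ (P1 b hb)); auto. apply (proj2 (IH b hb)); auto.
Qed.

Lemma stage_T B A R wf (HR : well_order R) :
  forall a : A,
    (forall n, Tpos (stage B R wf a) n -> exists psi, code psi = n /\ satS (stage B R wf a) psi) /\
    (forall n, Tneg (stage B R wf a) n -> exists psi, code psi = n /\ satS (stage B R wf a) (neg psi)).
Proof.
  intro a; induction a as [a IH] using (well_founded_ind wf).
  split; intros n hn.
  - apply (stage_unfold B A R wf a Tpos (or_introl eq_refl)) in hn.
    destruct hn as [[p [hp [_ h]]]|[_ [b [hb h]]]].
    + destruct h as [psi [_ [c s]]]. exists psi; split; auto.
      eapply sat_mono; [apply (proj1 (stage_mono B A R wf HR a)); exact hp | exact s].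
    + destruct (proj1 (IH b hb) n h) as [psi [c s]]. exists psi; split; auto.
      eapply sat_mono; [apply (proj1 (stage_mono B A R wf HR a)); exact hb | exact s].
  - apply (stage_unfold B A R wf a Tneg (or_intror (or_introl eq_refl))) in hn.
    destruct hn as [[p [hp [_ h]]]|[_ [b [hb h]]]].
    + destruct h as [psi [_ [c s]]]. exists psi; split; auto.
      eapply sat_mono; [apply (proj1 (stage_mono B A R wf HR a)); exact hp | exact s].
    + destruct (proj2 (IH b hb) n h) as [psi [c s]]. exists psi; split; auto.
      eapply sat_mono; [apply (proj1 (stage_mono B A R wf HR a)); exact hb | exact s].
Qed.

Lemma key B A R wf (HR : well_order R) (a : A) chi (bp : base_paradoxical chi)
  (Hc : consistent (stage B R wf a)) :
  satS (stage B R wf a) chi \/ satS (stage B R wf a) (neg chi) -> False.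
Proof.
  destruct bp as [_ [[d1 _] [d2 _]]].
  destruct (stage_T B A R wf HR a) as [hTp hTn].
  intros [h|h].
  - destruct (sound _ Hc _ _ d1 rho0) as [d [[<-|[]] sd]].
    + intros g [<-|[]]; exact h.
    + simpl in sd. unfold quote in sd. rewrite tval_num in sd.
      destruct (hTn _ sd) as [psi [c s]]. apply code_inj in c. subst psi.
      apply (cons_lemma _ Hc chi rho0); split; auto.
  - destruct (sound _ Hc _ _ d2 rho0) as [d [[<-|[]] sd]].
    + intros g [<-|[]]; exact h.
    + simpl in sd. unfold quote in sd. rewrite tval_num in sd.
      destruct (hTp _ sd) as [psi [c s]]. apply code_inj in c. subst psi.
      apply (cons_lemma _ Hc chi rho0); split; auto.
Qed.

Lemma scrP_empty B p : scrP_sat B empty_model p ->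
  satS empty_model (inst B (quote p)) \/ satS empty_model (inst B (quote (neg p))).
Proof.
  intros [[_ h]|h]; [exact h|exfalso].
  repeat match goal with H : _ \/ _ |- _ => destruct H | H : _ /\ _ |- _ => destruct H
    | H : exists _, _ |- _ => destruct H end; simpl in *; auto.
Qed.

Theorem mainTheorem6 (B : formula) (HB : defines_bp B)
  (A : Type) (R : A -> A -> Prop) (wf : well_founded R) (HR : well_order R)
  (a : A) :
  consistent (stage B R wf a) ->
  forall phi : formula, sentence phi ->
    Ppos (stage1 B) (code phi) ->
    ~ satS (stage B R wf a) (for_ phi (neg phi)).
Proof.
  intros Hc phi hs hP hsat.
  destruct hP as [phi' [_ [c hsc]]]. apply code_inj in c. subst phi'.
  destruct HB as [_ [_ HB3]].
  apply scrP_empty in hsc. destruct hsc as [h|h].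
  - apply (HB3 (code phi) rho0) in h. destruct h as [chi [c bp]].
    apply code_inj in c; subst chi.
    exact (key B A R wf HR a phi bp Hc hsat).
  - apply (HB3 (code (neg phi)) rho0) in h. destruct h as [chi [c bp]].
    apply code_inj in c; subst chi.
    apply (key B A R wf HR a (neg phi) bp Hc). rewrite neg_inv.
    destruct hsat; [right|left]; auto.
Qed.
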